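(* Let $T$ be a non-meagre subset with the Baire property of a metric space $X$, and let $G$ be a normed group, Baire in its norm topology, acting separately continuously and transitively on $X$ with the Nikodym property. Then for every convergent sequence $x_n\to x_0$ in $X$ there exist $\tau\in G$ and an integer $N$ such that $\tau x_0\in T$ and \[\{\tau(x_n):n>N\}\subseteq T.\]
   Context: A normed group is a group with a group-norm $\|\cdot\|$ (subadditive, $\|t\|>0$ for $t\ne e_G$, $\|e_G\|=0$, $\|t^{-1}\|=\|t\|$); its norm topology is that of $d_R(s,t)=\|st^{-1}\|$. A separately continuous action $\varphi:G\times X\to X$ ($\varphi(e_G,x)=x$, $\varphi(gh,x)=\varphi(g,\varphi(h,x))$, write $gx=g(x)=\varphi(g,x)$) has $x\mapsto g(x)$ continuous for each $g$ and $g\mapsto g(x)$ continuous for each $x$; transitive means for all $x,y$ some $g$ has $g(x)=y$. Nikodym property: for every non-empty open neighbourhood $U$ of $e_G$ and every $x$, $Ux=\{u(x):u\in U\}$ contains a non-meagre set with the Baire property. *)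

(* Defs.v *)
From HB Require Import structures.
From mathcomp Require Import all_boot all_order all_algebra.
From mathcomp Require Import all_classical all_reals all_analysis.
Set Implicit Arguments. Unset Strict Implicit. Unset Printing Implicit Defensive.
Import Order.TTheory GRing.Theory Num.Theory.
Local Open Scope classical_set_scope.
Local Open Scope ring_scope.

(** Topological notions relative to an explicit family [op] of open sets.
    Used with [op := open] for a topological space, and with the norm
    topology (below) for a normed group. *)
Section OpenFamily.
Variables (T : Type) (op : set T -> Prop).

Definition interior_op (A : set T) : set T :=
  [set x | exists U, [/\ op U, U `<=` A & U x]].
Definition closure_op (A : set T) : set T := ~` interior_op (~` A).
Definition nowhere_dense_op (A : set T) : Prop :=
  interior_op (closure_op A) = set0.
Definition meagre_op (A : set T) : Prop :=
  exists F : nat -> set T,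
    (forall n, nowhere_dense_op (F n)) /\ A `<=` \bigcup_n F n.
Definition baire_property_op (A : set T) : Prop :=
  exists U, op U /\ meagre_op ((A `\` U) `|` (U `\` A)).
Definition dense_op (D : set T) : Prop :=
  forall U, op U -> U !=set0 -> (U `&` D) !=set0.
Definition baire_space_op : Prop :=
  forall F : nat -> set T, (forall n, op (F n) /\ dense_op (F n)) ->
    dense_op (\bigcap_n F n).
End OpenFamily.

Record normedGroup (R : realType) := NormedGroup {
  ng_carrier :> Type;
  ng_mul : ng_carrier -> ng_carrier -> ng_carrier;
  ng_inv : ng_carrier -> ng_carrier;
  ng_one : ng_carrier;
  ng_norm : ng_carrier -> R;
  ng_mulA : forall a b c, ng_mul a (ng_mul b c) = ng_mul (ng_mul a b) c;
  ng_mul1g : forall a, ng_mul ng_one a = a;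
  ng_mulg1 : forall a, ng_mul a ng_one = a;
  ng_mulVg : forall a, ng_mul (ng_inv a) a = ng_one;
  ng_mulgV : forall a, ng_mul a (ng_inv a) = ng_one;
  ng_norm_subadd : forall s t, ng_norm (ng_mul s t) <= ng_norm s + ng_norm t;
  ng_norm_gt0 : forall t, t <> ng_one -> 0 < ng_norm t;
  ng_norm1 : ng_norm ng_one = 0;
  ng_normV : forall t, ng_norm (ng_inv t) = ng_norm t
}.

Section NormTopology.
Variables (R : realType) (G : normedGroup R).
Definition dR (s t : G) : R := ng_norm (ng_mul s (ng_inv t)).
Definition norm_open (U : set G) : Prop :=
  forall s, U s -> exists2 r : R, 0 < r & forall t, dR t s < r -> U t.
End NormTopology.

Section Action.
Variables (R : realType) (G : normedGroup R) (X : topologicalType)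
  (phi : G -> X -> X).
Definition is_action : Prop :=
  (forall x, phi (ng_one G) x = x) /\
  (forall g h x, phi (ng_mul g h) x = phi g (phi h x)).
Definition separately_continuous : Prop :=
  (forall g, continuous (phi g)) /\
  (forall x (V : set X), open V -> norm_open (fun g => V (phi g x))).
Definition transitive_action : Prop :=
  forall x y, exists g, phi g x = y.
Definition nikodym_property : Prop :=
  forall (U : set G), norm_open U -> U (ng_one G) ->
  forall x, exists B : set X,
    B `<=` [set phi u x | u in U] /\
    ~ meagre_op open B /\ baire_property_op open B.
End Action.

(* Main.v *)
Require Import Defs.
From HB Require Import structures.
From mathcomp Require Import all_boot all_order all_algebra.
From mathcomp Require Import all_classical all_reals all_analysis.
Local Open Scope classical_set_scope.
Local Open Scope ring_scope.

Lemma interior_open (X : topologicalType) (A : set X) :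
  open (interior_op open A).
Proof.
have -> : interior_op open A =
  \bigcup_(U in [set U | open U /\ U `<=` A]) U.
  apply/seteqP; split => x.
    by case=> U [oU UA Ux]; exists U.
  by case=> U [oU UA] Ux; exists U.
by apply: bigcup_open => U [].
Qed.

Lemma interior_mono (X : topologicalType) (A B : set X) :
  A `<=` B -> interior_op open A `<=` interior_op open B.
Proof. move=> AB x [U [oU UA Ux]]; exists U; split => //; exact: subset_trans AB. Qed.

Lemma interior_sub (X : topologicalType) (A : set X) :
  interior_op open A `<=` A.
Proof. by move=> x [U [_ UA Ux]]; apply: UA. Qed.

Lemma closure_nd (X : topologicalType) (F : set X) :
  nowhere_dense_op open F -> nowhere_dense_op open (closure_op open F).
Proof.
rewrite /nowhere_dense_op => H; apply/seteqP; split => // x Hx.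
rewrite -H; apply: interior_mono Hx => y; rewrite /closure_op => Hy Hy'.
apply: Hy; exists (interior_op open (~` F)); split => //.
  exact: interior_open.
by move=> z Hz Hn; exact: Hn Hz.
Qed.

Lemma sub_closure (X : topologicalType) (F : set X) :
  F `<=` closure_op open F.
Proof. by move=> x Fx /interior_sub; apply. Qed.

Theorem proposition3 (R : realType) (X : metricType R) (G : normedGroup R)
  (phi : G -> X -> X) (T : set X) :
  ~ meagre_op open T -> baire_property_op open T ->
  baire_space_op (@norm_open R G) ->
  is_action phi -> separately_continuous phi -> transitive_action phi ->
  nikodym_property phi ->
  forall (x : nat -> X) (x0 : X), x @ \oo --> x0 ->
  exists (tau : G) (N : nat),
    T (phi tau x0) /\ forall n, (N < n)%N -> T (phi tau (x n)).
Proof.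
move=> nmT [U [oU [F [ndF MF]]]] Hbaire [act1 actM] [contg contx] Htr Hnik x x0 Hx.
pose y (i : nat) := if i is j.+1 then x j else x0.
pose C k := interior_op open (~` F k).
pose W (i k : nat) := [set g : G | C k (phi g (y i))].
have oW i k : norm_open (W i k) by apply: contx; exact: interior_open.
have dW i k : dense_op (@norm_open R G) (W i k).
  move=> O oO [h Oh]; apply/not_existsP => Hno.
  pose O' := [set g : G | O (ng_mul g h)].
  have oO' : norm_open O'.
    move=> g /oO [r r0 Hr]; exists r => // t Ht; apply: Hr.
    move: Ht; rewrite /dR /O' /=.
    suff -> : ng_mul (ng_mul t h) (ng_inv (ng_mul g h)) = ng_mul t (ng_inv g) by [].
    rewrite -[in LHS](ng_mulg1 t) -(ng_mulVg g) !ng_mulA -!ng_mulA.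
    by rewrite [ng_mul g (ng_mul h _)]ng_mulA ng_mulgV ng_mulg1.
  have O'1 : O' (ng_one G) by rewrite /O' /= ng_mul1g.
  have [B [BO' [nmB _]]] := Hnik O' oO' O'1 (phi h (y i)).
  apply: nmB; exists (fun=> closure_op open (F k)); split.
    by move=> _; apply: closure_nd.
  move=> b /BO' [u Ou <-]; exists 0%N => //.
  rewrite /closure_op => Hc; apply: (Hno (ng_mul u h)); split => //.
  by rewrite /W /= actM.
have [u Uu] : U !=set0.
  case: (pselect (U !=set0)) => // nU; exfalso; apply: nmT; exists F; split => //.
  move=> t Tt; apply: MF; left; split => // Ut; apply: nU; by exists t.
have [g0 g0u] := Htr x0 u.
pose Wn (m : nat) : set G :=
  match (unpickle m : option (nat * nat)) with Some p => W p.1 p.2 | None => setT end.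
have [tau [Htau0 Htau]] : ([set g | U (phi g x0)] `&` \bigcap_n Wn n) !=set0.
  apply: Hbaire.
- move=> m; rewrite /Wn; case: (unpickle m : option (nat * nat)) => [[i k]|]; first by split.
  split; first by move=> s _; exists 1%R => //.
  by move=> O _ [s Os]; exists s.
- exact: contx.
- by exists g0; rewrite /= g0u.
have inT p : U p -> (forall k, C k p) -> T p.
  move=> Up Cp; case: (pselect (T p)) => // nTp; exfalso.
  have [k _ Fk] := MF p (or_intror (conj Up nTp)).
  exact: (@interior_sub _ (~` F k) p (Cp k) Fk).
have HW i k : W i k tau by have := Htau (pickle (i, k)) I; rewrite /Wn pickleK.
have Hev : \forall n \near \oo, U (phi tau (x n)).
  have Hc : (phi tau \o x) @ \oo --> phi tau x0.
    apply: cvg_comp Hx _; exact: contg.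
  apply: Hc; apply: open_nbhs_nbhs; split => //.
case: Hev => N _ HN; exists tau, N; split.
  by apply: inT => // k; apply: (HW 0%N k).
move=> n Nn; apply: inT; first by apply: HN; rewrite /= ltnW.
by move=> k; apply: (HW n.+1 k).
Qed.
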